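(* Let $R$ be a $\delta$-ring, $I$ an ideal of $R$ containing $p$, and $A$ a $\delta$-$R$-algebra which is $I$-adically separated with $A/I^nA$ smooth over $R/I^n$ for all $n\ge1$. Let $T_1,\dots,T_d\in A$ be such that $d(T_i\bmod IA)$ form a basis of $\Omega_{(A/IA)/(R/I)}$. Let $\alpha,\beta\in A$ with $\delta(\alpha)=\alpha\beta$ and let $\partial$ be an $\alpha$-derivation of $A$ over $R$. Then $\partial$ is $\delta$-compatible with respect to $\beta$ if and only if each $T_i$ ($1\le i\le d$) is $\delta$-compatible with respect to $\partial$ and $\beta$.
   Context: $p$ a fixed prime; $\delta$-rings: $\delta(0)=\delta(1)=0$, $\delta(x+y)=\delta(x)+\delta(y)-\sum_{i=1}^{p-1}\frac1p\binom pi x^iy^{p-i}$, $\delta(xy)=\delta(x)y^p+x^p\delta(y)+p\delta(x)\delta(y)$. An $\alpha$-derivation of $A$ over $R$ is an $R$-linear $\partial$ with $\partial(1)=0$, $\partial(xy)=\partial(x)y+x\partial(y)+\alpha\partial(x)\partial(y)$. An element $x\in A$ is $\delta$-compatible with respect to $\partial$ and $\beta$ if $\partial(\delta(x))=(\alpha^{p-1}+p\beta)\delta(\partial(x))+\beta\partial(x)^p-\sum_{\nu=1}^{p-1}\frac1p\binom p\nu x^{p-\nu}\alpha^{\nu-1}\partial(x)^\nu$; $\partial$ is $\delta$-compatible with respect to $\beta$ if every $x\in A$ is. *)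

(* Defs.v *)
From HB Require Import structures.
From mathcomp Require Import all_boot all_order all_algebra.
From mathcomp Require Import mpoly.

Set Implicit Arguments.
Unset Strict Implicit.
Unset Printing Implicit Defensive.

Import Order.TTheory GRing.Theory.
Local Open Scope ring_scope.

(* the rational number (1/p) binom(p,i) for 0 < i < p, as an element of a ring *)
Definition binp {T : pzRingType} (p i : nat) : T := ('C(p, i) %/ p)%N%:R.

Definition is_delta (p : nat) (T : comPzRingType) (delta : T -> T) : Prop :=
  [/\ delta 0 = 0, delta 1 = 0,
      (forall x y, delta (x + y) =
          delta x + delta y - \sum_(1 <= i < p) binp p i * x ^+ i * y ^+ (p - i))
    & (forall x y, delta (x * y) =
          delta x * y ^+ p + x ^+ p * delta y + p%:R * delta x * delta y)].

Definition is_ideal (R : comNzRingType) (I : R -> Prop) : Prop :=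
  [/\ I 0, (forall x y, I x -> I y -> I (x + y)) & (forall r x, I x -> I (r * x))].

Fixpoint idealPow (R : comNzRingType) (I : R -> Prop) (n : nat) : R -> Prop :=
  match n with
  | 0 => fun _ => True
  | n'.+1 => fun r => exists m (s t : 'I_m -> R),
       [/\ forall k, I (s k), forall k, idealPow I n' (t k)
         & r = \sum_(k < m) s k * t k]
  end.

Definition extIdeal (R : comNzRingType) (A : comAlgType R) (J : R -> Prop) (a : A)
  : Prop :=
  exists m (c : 'I_m -> A) (s : 'I_m -> R),
    (forall k, J (s k)) /\ a = \sum_(k < m) c k * (s k)%:A.

Definition adically_separated (R : comNzRingType) (A : comAlgType R) (I : R -> Prop) :=
  forall a : A, (forall n, extIdeal (idealPow I n) a) -> a = 0.

Definition is_ralg_hom (R : comNzRingType) (A B : comAlgType R) (f : A -> B) : Prop :=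
  [/\ f 1 = 1, (forall x y, f (x * y) = f x * f y)
    & (forall (r : R) x y, f (r *: x + y) = r *: f x + f y)].

(* A / J A is formally smooth over R / J (J an ideal of R): lifting property
   along surjections of R/J-algebras C -> D with square-zero kernel.
   An R/J-algebra is an R-algebra C with J C = 0, and R/J-algebra maps
   A/JA -> D are exactly R-algebra maps A -> D. *)
Definition formally_smooth_mod (R : comNzRingType) (A : comAlgType R) (J : R -> Prop) :=
  forall (C D : comAlgType R) (pi : C -> D) (g : A -> D),
    (forall r, J r -> r%:A = 0 :> C) ->
    is_ralg_hom pi -> (forall d, exists c, pi c = d) ->
    (forall x y, pi x = 0 -> pi y = 0 -> x * y = 0) ->
    is_ralg_hom g ->
    exists h : A -> C, is_ralg_hom h /\ forall a, pi (h a) = g a.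

Definition evalA (R : comNzRingType) (A : comAlgType R) (m : nat)
  (P : {mpoly R[m]}) (a : 'I_m -> A) : A := mmap (fun r : R => r%:A) a P.

(* A / J A is of finite presentation over R / J *)
Definition fin_pres_mod (R : comNzRingType) (A : comAlgType R) (J : R -> Prop) :=
  exists m (a : 'I_m -> A),
    (forall x : A, exists P : {mpoly R[m]}, extIdeal J (x - evalA P a)) /\
    exists k (Q : 'I_k -> {mpoly R[m]}),
      (forall j, extIdeal J (evalA (Q j) a)) /\
      forall P : {mpoly R[m]}, extIdeal J (evalA P a) ->
        exists (c : 'I_k -> {mpoly R[m]}) (E : {mpoly R[m]}),
          (forall mu, J (E@_mu)) /\ P = \sum_(j < k) c j * Q j + E.

Definition smooth_mod (R : comNzRingType) (A : comAlgType R) (J : R -> Prop) :=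
  fin_pres_mod A J /\ formally_smooth_mod A J.

Definition is_Rderivation (R : comNzRingType) (A : comAlgType R) (M : lmodType A)
  (D : A -> M) : Prop :=
  (forall (r : R) x y, D (r *: x + y) = r%:A *: D x + D y) /\
  (forall x y, D (x * y) = x *: D y + y *: D x).

(* d(T_i mod IA) form a basis of Omega_{(A/IA)/(R/I)}, expressed through the
   universal property of Kaehler differentials: for every A/IA-module M
   (= A-module killed by I), every family of values in M is attained by a
   unique (R/I)-derivation A/IA -> M (= R-derivation A -> M). *)
Definition kahler_basis (R : comNzRingType) (A : comAlgType R) (I : R -> Prop)
  (d : nat) (T : 'I_d -> A) : Prop :=
  forall (M : lmodType A), (forall r, I r -> forall m : M, r%:A *: m = 0) ->
  forall v : 'I_d -> M,
    exists D : A -> M, [/\ is_Rderivation D, (forall i, D (T i) = v i)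
      & forall D' : A -> M, is_Rderivation D' -> (forall i, D' (T i) = v i) ->
          forall x, D' x = D x].

Definition is_alpha_derivation (R : comNzRingType) (A : comAlgType R) (alpha : A)
  (D : A -> A) : Prop :=
  [/\ (forall (r : R) x y, D (r *: x + y) = r *: D x + D y), D 1 = 0
    & (forall x y, D (x * y) = D x * y + x * D y + alpha * D x * D y)].

Definition delta_compatible_elt (p : nat) (A : comPzRingType) (delta : A -> A)
  (alpha beta : A) (D : A -> A) (x : A) : Prop :=
  D (delta x) = (alpha ^+ p.-1 + p%:R * beta) * delta (D x) + beta * D x ^+ p
     - \sum_(1 <= nu < p) binp p nu * x ^+ (p - nu) * alpha ^+ nu.-1 * D x ^+ nu.

Definition delta_compatible (p : nat) (A : comPzRingType) (delta : A -> A)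
  (alpha beta : A) (D : A -> A) : Prop :=
  forall x, delta_compatible_elt p delta alpha beta D x.

(* Main.v *)
Require Import Defs.
From HB Require Import structures.
From mathcomp Require Import all_boot all_order all_algebra.
From mathcomp Require Import mpoly.
From mathcomp Require Import ring zify boolp.
Set Implicit Arguments.
Unset Strict Implicit.
Import GRing.Theory Num.Theory.
Local Open Scope ring_scope.


Section Gen.
Variable p : nat.
Hypothesis hp : prime p.

Definition Cp (K : comPzRingType) (x y : K) : K :=
  \sum_(1 <= i < p) binp p i * x ^+ i * y ^+ (p - i).

Lemma binpE (K : pzRingType) i : (0 < i < p)%N -> (binp p i : K) * p%:R = ('C(p, i))%:R.
Proof. move=> hi; by rewrite /binp -natrM divnK // prime_dvd_bin. Qed.

Lemma pCp (K : comPzRingType) (x y : K) :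
  p%:R * Cp x y = (x + y) ^+ p - x ^+ p - y ^+ p.
Proof.
have p0 : (0 < p)%N by apply: prime_gt0.
rewrite [x + y]addrC exprDn.
rewrite -[\sum_(i < p.+1) _](big_mkord xpredT (fun i => y ^+ (p - i) * x ^+ i *+ 'C(p, i))).
rewrite big_ltn // big_nat_recr //= subn0 subnn bin0 binn expr0 !mulr1 mul1r.
rewrite /Cp mulr_sumr.
have -> : \sum_(1 <= i < p) y ^+ (p - i) * x ^+ i *+ 'C(p, i) =
          \sum_(1 <= i < p) p%:R * (binp p i * x ^+ i * y ^+ (p - i)).
  apply: eq_big_nat => i hi.
  by rewrite -mulr_natr -binpE // ; ring.
ring.
Qed.
End Gen.
Section Gen2.
Variable p : nat.
Hypothesis hp : prime p.

Lemma rmorph_Cp (K K' : comPzRingType) (f : {rmorphism K -> K'}) (x y : K) :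
  f (Cp p x y) = Cp p (f x) (f y).
Proof.
rewrite /Cp rmorph_sum; apply: eq_bigr => i _.
by rewrite !rmorphM !rmorphXn /binp rmorph_nat.
Qed.

Lemma Cp_cocycle_p (K : comPzRingType) (x y z : K) :
  p%:R * (Cp p x y + Cp p (x + y) z) = p%:R * (Cp p y z + Cp p x (y + z)).
Proof.
rewrite mulrDr [RHS]mulrDr !pCp // [x + (y + z)]addrA.
move: (_ ^+ p) (_ ^+ p) (_ ^+ p) (_ ^+ p) (_ ^+ p) (_ ^+ p) => a b c d e f.
ring.
Qed.

Lemma Cp_cocycle_univ :
  Cp p ('X_0 : {mpoly int[3]}) 'X_1 + Cp p ('X_0 + 'X_1) 'X_2 = Cp p 'X_1 'X_2 + Cp p 'X_0 ('X_1 + 'X_2).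
Proof.
have pn0 : (p%:R : {mpoly int[3]}) != 0.
  rewrite -mpolyC_nat mpolyC_eq0 pnatr_eq0; apply/eqP=> p0; move: hp; by rewrite p0.
exact: (mulfI pn0 (Cp_cocycle_p _ _ _)).
Qed.

Lemma Cp_cocycle_transport (K K' : comPzRingType) (f : {rmorphism K -> K'}) (x y z : K) x' y' z' :
  f x = x' -> f y = y' -> f z = z' ->
  Cp p x y + Cp p (x + y) z = Cp p y z + Cp p x (y + z) ->
  Cp p x' y' + Cp p (x' + y') z' = Cp p y' z' + Cp p x' (y' + z').
Proof. by move=> <- <- <-; move/(congr1 f); rewrite !rmorphD !rmorph_Cp !rmorphD. Qed.

Lemma Cp_cocycle (K : comNzRingType) (x y z : K) :
  Cp p x y + Cp p (x + y) z = Cp p y z + Cp p x (y + z).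
Proof.
pose h : 'I_3 -> K := fun i => if val i == 0%N then x else if val i == 1%N then y else z.
apply: (Cp_cocycle_transport (f := mmap (intr : int -> K) h) _ _ _ Cp_cocycle_univ);
  by rewrite /= mmapX mmap1U.
Qed.
Lemma Cp_sym (K : comPzRingType) (x y : K) : Cp p x y = Cp p y x.
Proof.
rewrite /Cp big_nat_rev /=; apply: eq_big_nat => i /andP [hi1 hip].
have -> : (1 + p - i.+1 = p - i)%N by lia.
have -> : (p - (p - i) = i)%N by lia.
rewrite /binp (bin_sub (ltnW hip)); ring.
Qed.

Lemma Cp_four (K : comNzRingType) (W X Y Z : K) :
  Cp p W X + Cp p Y Z + Cp p (W + X) (Y + Z) = Cp p W Y + Cp p X Z + Cp p (W + Y) (X + Z).
Proof.
have h1 := Cp_cocycle W X (Y + Z).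
have h2 := Cp_cocycle X Y Z.
have h3 := Cp_cocycle W Y (X + Z).
have h4 := Cp_cocycle Y X Z.
have eYXZ : Y + (X + Z) = X + (Y + Z) by ring.
rewrite eYXZ in h3; rewrite (Cp_sym Y X) (addrC Y X) in h4.
have e1 : Cp p (W + X) (Y + Z) = Cp p X (Y + Z) + Cp p W (X + (Y + Z)) - Cp p W X.
  by rewrite -h1; ring.
have e3 : Cp p (W + Y) (X + Z) = Cp p Y (X + Z) + Cp p W (X + (Y + Z)) - Cp p W Y.
  by rewrite -h3; ring.
have e2 : Cp p Y Z = Cp p X Y + Cp p (X + Y) Z - Cp p X (Y + Z).
  by rewrite h2; ring.
have e4 : Cp p X Z = Cp p X Y + Cp p (X + Y) Z - Cp p Y (X + Z).
  by rewrite h4; ring.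
rewrite e1 e3 e2 e4; ring.
Qed.

Lemma delta_four (K : comNzRingType) (d : K -> K) (W X Y Z : K) :
  d (W + X) = d W + d X - Cp p W X ->
  d (Y + Z) = d Y + d Z - Cp p Y Z ->
  d ((W + X) + (Y + Z)) = d (W + X) + d (Y + Z) - Cp p (W + X) (Y + Z) ->
  d (W + Y) = d W + d Y - Cp p W Y ->
  d (X + Z) = d X + d Z - Cp p X Z ->
  d ((W + Y) + (X + Z)) = d (W + Y) + d (X + Z) - Cp p (W + Y) (X + Z).
Proof.
move=> h1 h2 h3 h4 h5.
have -> : W + Y + (X + Z) = W + X + (Y + Z) by ring.
rewrite h3 h1 h2 h4 h5.
have := Cp_four W X Y Z.
move: (Cp p W X) (Cp p Y Z) (Cp p (W + X) (Y + Z)) (Cp p W Y) (Cp p X Z) (Cp p (W + Y) (X + Z)) => a b c d1 e f h.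
have -> : f = a + b + c - d1 - e by rewrite h; ring.
ring.
Qed.
Lemma Cp_hom (K : comPzRingType) (x y z : K) : Cp p (x * y) (x * z) = x ^+ p * Cp p y z.
Proof.
rewrite /Cp mulr_sumr; apply: eq_big_nat => i /andP [hi1 hip].
have -> : x ^+ p = x ^+ i * x ^+ (p - i) by rewrite -exprD subnKC // ltnW.
rewrite !exprMn; ring.
Qed.
End Gen2.

Section BRing.
Variables (K : comNzRingType) (al : K).

Lemma pair_eq (a b c d : K) : a = c -> b = d -> (a, b) = (c, d).
Proof. by move=> -> ->. Qed.

Definition Bt (a : K) : Type := (K * K)%type.
Local Notation BB := (Bt al).
HB.instance Definition _ := GRing.Zmodule.on BB.

Lemma addBE0 (x y : BB) : x + y = (x.1 + y.1, x.2 + y.2).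
Proof. by []. Qed.

Definition mulB (x y : BB) : BB := (x.1 * y.1, x.2 * y.1 + x.1 * y.2 + al * x.2 * y.2).
Definition oneB : BB := (1, 0).

Lemma mulBA : associative mulB.
Proof. by move=> [x1 x2] [y1 y2] [z1 z2]; rewrite /mulB /=; apply: pair_eq; ring. Qed.
Lemma mulBC : commutative mulB.
Proof. by move=> [x1 x2] [y1 y2]; rewrite /mulB /=; apply: pair_eq; ring. Qed.
Lemma mul1B : left_id oneB mulB.
Proof. by move=> [x1 x2]; rewrite /mulB /oneB /=; apply: pair_eq; ring. Qed.
Lemma mulBDl : left_distributive mulB +%R.
Proof. by move=> [x1 x2] [y1 y2] [z1 z2]; rewrite /mulB !addBE0 /=; apply: pair_eq; ring. Qed.
Lemma oneB_neq0 : oneB != 0.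
Proof. by apply/negP => /eqP [] /eqP; rewrite oner_eq0. Qed.

HB.instance Definition _ := GRing.Zmodule_isComNzRing.Build BB mulBA mulBC mul1B mulBDl oneB_neq0.

Lemma mulBE (x y : BB) : x * y = (x.1 * y.1, x.2 * y.1 + x.1 * y.2 + al * x.2 * y.2).
Proof. by []. Qed.
Lemma addBE (x y : BB) : x + y = (x.1 + y.1, x.2 + y.2).
Proof. by []. Qed.
Lemma oppBE (x : BB) : - x = (- x.1, - x.2).
Proof. by []. Qed.
Lemma subBE (x y : BB) : x - y = (x.1 - y.1, x.2 - y.2).
Proof. by []. Qed.
Lemma oneBE : (1 : BB) = (1, 0).
Proof. by []. Qed.
Lemma zeroBE : (0 : BB) = (0, 0).
Proof. by []. Qed.
Lemma natBE n : (n%:R : BB) = (n%:R, 0).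
Proof. elim: n => [|n IH] //; by rewrite -addn1 !natrD IH addBE /= addr0. Qed.
Lemma iotaX (c : K) n : ((c, 0) : BB) ^+ n = (c ^+ n, 0).
Proof. elim: n => [|n IH] //; by rewrite !exprS IH mulBE /=; apply: pair_eq; ring. Qed.
Lemma epsX (b : K) n : ((0, b) : BB) ^+ n.+1 = (0, al ^+ n * b ^+ n.+1).
Proof.
elim: n => [|n IH]; first by rewrite expr1 expr0 mul1r expr1.
by rewrite exprS IH mulBE /=; apply: pair_eq; rewrite ?exprS; ring.
Qed.
End BRing.

Section BMor.
Variables (K : comNzRingType) (al : K).
Local Notation B := (Bt al).

Definition iotaB (c : K) : B := (c, 0).
Definition epsB (b : K) : B := (0, b).
Definition fstB (P : B) : K := P.1.
Definition sndB (P : B) : K := P.2.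

Lemma iotaB_is_zmod_morphism : zmod_morphism iotaB.
Proof. by move=> x y; rewrite /iotaB subBE /= subr0. Qed.
HB.instance Definition _ := GRing.isZmodMorphism.Build K B iotaB iotaB_is_zmod_morphism.
Lemma iotaB_is_monoid_morphism : monoid_morphism iotaB.
Proof. split=> // x y; rewrite /iotaB mulBE /=; apply: pair_eq; ring. Qed.
HB.instance Definition _ := GRing.isMonoidMorphism.Build K B iotaB iotaB_is_monoid_morphism.

Lemma fstB_is_zmod_morphism : zmod_morphism fstB.
Proof. by []. Qed.
HB.instance Definition _ := GRing.isZmodMorphism.Build B K fstB fstB_is_zmod_morphism.
Lemma fstB_is_monoid_morphism : monoid_morphism fstB.
Proof. by split. Qed.
HB.instance Definition _ := GRing.isMonoidMorphism.Build B K fstB fstB_is_monoid_morphism.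

Lemma sndB_is_zmod_morphism : zmod_morphism sndB.
Proof. by []. Qed.
HB.instance Definition _ := GRing.isZmodMorphism.Build B K sndB sndB_is_zmod_morphism.
Lemma epsB_is_zmod_morphism : zmod_morphism epsB.
Proof. by move=> x y; rewrite /epsB subBE /= subr0. Qed.
HB.instance Definition _ := GRing.isZmodMorphism.Build K B epsB epsB_is_zmod_morphism.
End BMor.

Section Delta.
Variables (p : nat) (hp : prime p).
Variables (A : comNzRingType) (dl : A -> A) (al be : A).
Hypothesis hd : is_delta p dl.
Hypothesis hab : dl al = al * be.
Local Notation B := (Bt al).

Lemma p_gt0 : (0 < p)%N. Proof. exact: prime_gt0. Qed.
Lemma p_gt1 : (1 < p)%N. Proof. exact: prime_gt1. Qed.

Definition Sx (x u : A) : A :=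
  \sum_(1 <= nu < p) binp p nu * x ^+ (p - nu) * al ^+ nu.-1 * u ^+ nu.
Definition Fx (x u : A) : A :=
  (al ^+ p.-1 + p%:R * be) * dl u + be * u ^+ p - Sx x u.
Definition dB (P : B) : B := (dl P.1, Fx P.1 P.2).

Lemma Sx_u0 x : Sx x 0 = 0.
Proof.
rewrite /Sx big_nat big1 // => i /andP [hi _].
by rewrite expr0n eqn0Ngt hi mulr0.
Qed.
Lemma Sx_x0 u : Sx 0 u = 0.
Proof.
rewrite /Sx big_nat big1 // => i /andP [_ hi].
by rewrite expr0n eqn0Ngt subn_gt0 hi mulr0 mul0r mul0r.
Qed.

Lemma dl0 : dl 0 = 0. Proof. by case: hd. Qed.
Lemma Fx_u0 x : Fx x 0 = 0.
Proof. by rewrite /Fx Sx_u0 dl0 expr0n eqn0Ngt p_gt0 /=; ring. Qed.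

Lemma Cp_iota (c d : A) : Cp p (iotaB al c) (iotaB al d) = iotaB al (Cp p c d).
Proof. by rewrite rmorph_Cp. Qed.

Lemma sum_eps (I : Type) (r : seq I) (P : pred I) (F : I -> A) :
  \sum_(i <- r | P i) epsB al (F i) = epsB al (\sum_(i <- r | P i) F i).
Proof. by rewrite raddf_sum. Qed.

Lemma Cp_eps (b b' : A) : Cp p (epsB al b) (epsB al b') = epsB al (al ^+ p.-1 * Cp p b b').
Proof.
rewrite /Cp mulr_sumr -sum_eps; apply: eq_big_nat => i /andP [hi1 hip].
case: i hi1 hip => [//|i] _ hip.
have -> : (p - i.+1 = (p - i.+2).+1)%N by lia.
rewrite !epsX /binp natBE !mulBE /epsB /=; apply: pair_eq; first ring.
have -> : al ^+ p.-1 = al * al ^+ i * al ^+ (p - i.+2).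
  rewrite -exprS -exprD; congr (_ ^+ _); lia.
ring.
Qed.
Lemma Cp_iota_eps (c b : A) : Cp p (iotaB al c) (epsB al b) = epsB al (Sx c b).
Proof.
rewrite /Cp /Sx big_nat_rev /= -sum_eps; apply: eq_big_nat => i /andP [hi1 hip].
have -> : (1 + p - i.+1 = p - i)%N by lia.
have -> : (p - (p - i) = i)%N by lia.
case: i hi1 hip => [//|i] _ hip.
rewrite iotaX epsX /binp natBE !mulBE /iotaB /epsB /=; apply: pair_eq; first ring.
rewrite (bin_sub (ltnW hip)) /=.
ring.
Qed.
Lemma dlD x y : dl (x + y) = dl x + dl y - Cp p x y. Proof. by case: hd. Qed.
Lemma dlM x y : dl (x * y) = dl x * y ^+ p + x ^+ p * dl y + p%:R * dl x * dl y.
Proof. by case: hd. Qed.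
Lemma dl1 : dl 1 = 0. Proof. by case: hd. Qed.

Definition gam := al ^+ p.-1 + p%:R * be.

Lemma dB_iota c : dB (iotaB al c) = iotaB al (dl c).
Proof. by rewrite /dB /iotaB /= Fx_u0. Qed.
Lemma dB_eps b : dB (epsB al b) = epsB al (gam * dl b + be * b ^+ p).
Proof. by rewrite /dB /epsB /= dl0 /Fx Sx_x0 subr0. Qed.

Lemma dB_add_iota c d :
  dB (iotaB al c + iotaB al d) = dB (iotaB al c) + dB (iotaB al d) - Cp p (iotaB al c) (iotaB al d).
Proof. by rewrite -rmorphD !dB_iota Cp_iota -!rmorphD -rmorphB dlD. Qed.

Lemma dB_add_eps b b' :
  dB (epsB al b + epsB al b') = dB (epsB al b) + dB (epsB al b') - Cp p (epsB al b) (epsB al b').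
Proof.
rewrite -raddfD !dB_eps Cp_eps -!raddfD -raddfB; congr (epsB al _).
have hC := pCp hp b b'.
have -> : (b + b') ^+ p = b ^+ p + b' ^+ p + p%:R * Cp p b b' by rewrite hC; ring.
rewrite dlD /gam; ring.
Qed.

Lemma pairB (P : B) : P = iotaB al P.1 + epsB al P.2.
Proof. by case: P => x y; rewrite /iotaB /epsB addBE /= addr0 add0r. Qed.

Lemma dB_split c b :
  dB (iotaB al c + epsB al b) = dB (iotaB al c) + dB (epsB al b) - Cp p (iotaB al c) (epsB al b).
Proof.
rewrite dB_iota dB_eps Cp_iota_eps /dB /iotaB /epsB !addBE oppBE /=.
rewrite /Fx /gam; rewrite !addr0 !add0r; apply: pair_eq; ring.
Qed.

Lemma dB_add P Q : dB (P + Q) = dB P + dB Q - Cp p P Q.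
Proof.
rewrite (pairB P) (pairB Q).
move: P.1 P.2 Q.1 Q.2 => c b c' b'.
apply: (@delta_four p hp _ dB (iotaB al c) (iotaB al c') (epsB al b) (epsB al b')).
- exact: dB_add_iota.
- exact: dB_add_eps.
- by rewrite -rmorphD -raddfD dB_split.
- exact: dB_split.
- exact: dB_split.
Qed.

Definition MultP (P Q : B) :=
  dB (P * Q) = dB P * Q ^+ p + P ^+ p * dB Q + p%:R * dB P * dB Q.

Lemma MultP_sym P Q : MultP P Q -> MultP Q P.
Proof. by rewrite /MultP mulrC => ->; ring. Qed.

Lemma MultP_addr P Q1 Q2 : MultP P Q1 -> MultP P Q2 -> MultP P (Q1 + Q2).
Proof.
rewrite /MultP mulrDr !dB_add => h1 h2; rewrite h1 h2 Cp_hom.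
have -> : (Q1 + Q2) ^+ p = Q1 ^+ p + Q2 ^+ p + p%:R * Cp p Q1 Q2 by rewrite pCp //; ring.
ring.
Qed.

Lemma MultP_addl P1 P2 Q : MultP P1 Q -> MultP P2 Q -> MultP (P1 + P2) Q.
Proof. by move=> /MultP_sym h1 /MultP_sym h2; apply/MultP_sym/MultP_addr. Qed.

Lemma epsXp b : (epsB al b) ^+ p = epsB al (al ^+ p.-1 * b ^+ p).
Proof. by have := epsX al b p.-1; rewrite prednK ?p_gt0. Qed.

Lemma MultP_ii c d : MultP (iotaB al c) (iotaB al d).
Proof.
by rewrite /MultP -rmorphM !dB_iota -!rmorphXn -(rmorph_nat (iotaB al) p) -!rmorphM -!rmorphD dlM.
Qed.

Lemma MultP_ie c b : MultP (iotaB al c) (epsB al b).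
Proof.
rewrite /MultP !dB_iota dB_eps epsXp -rmorphXn natBE /iotaB /epsB !mulBE !addBE /=.
rewrite !mulr0 !mul0r !addr0 !add0r /dB /Fx /= Sx_x0 dl0 dlM /gam exprMn.
apply: pair_eq; ring.
Qed.

Lemma MultP_ee b b' : MultP (epsB al b) (epsB al b').
Proof.
rewrite /MultP (natBE al p) !dB_eps !epsXp /epsB !mulBE !addBE /=.
rewrite !mulr0 !mul0r !addr0 !add0r /dB /Fx /= Sx_x0 dl0 !dlM hab /gam !exprMn.
have ap : al ^+ p = al * al ^+ p.-1 by rewrite -exprS prednK ?p_gt0.
rewrite ap.
apply: pair_eq; ring.
Qed.

Lemma MultP_all P Q : MultP P Q.
Proof.
rewrite (pairB P) (pairB Q).
apply: MultP_addl; apply: MultP_addr.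
- exact: MultP_ii.
- exact: MultP_ie.
- exact/MultP_sym/MultP_ie.
- exact: MultP_ee.
Qed.

End Delta.


Section Quot.
Variables (A : comNzRingType) (P Q : A -> Prop) (psi : A -> A).
Record QHyp : Prop := {
  P0 : P 0; PD : forall x y, P x -> P y -> P (x + y);
  PM : forall a x, P x -> P (a * x);
  Q0 : Q 0; QD : forall x y, Q x -> Q y -> Q (x + y);
  QM : forall a x, Q x -> Q (a * x); QP : forall x, Q x -> P x;
  psiD : forall x y, psi (x + y) = psi x + psi y; psi1 : psi 1 = 1;
  psiM : forall x y, psi (x * y) = psi x * psi y }.
Variable H : QHyp.
Let P0 := P0 H. Let PD := PD H. Let PM := PM H. Let Q0 := Q0 H. Let QD := QD H.
Let QM := QM H. Let QP := QP H. Let psiD := psiD H. Let psi1 := psi1 H. Let psiM := psiM H.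

Definition Mq : Type := (fun _ : QHyp => {S : A -> Prop | exists m, P m /\ S = (fun y => Q (y - m))}) H.
HB.instance Definition _ := gen_eqMixin Mq.
HB.instance Definition _ := gen_choiceMixin Mq.

Definition mkq (m : A) (Pm : P m) : Mq :=
  exist _ (fun y => Q (y - m)) (ex_intro _ m (conj Pm erefl)).
Definition cl (m : A) : Mq :=
  match pselect (P m) with left Pm => mkq Pm | right _ => mkq P0 end.
Definition rep (S : Mq) : A := projT1 (cid (proj2_sig S)).
Lemma repP S : P (rep S) /\ sval S = (fun y => Q (y - rep S)).
Proof. exact: (projT2 (cid (proj2_sig S))). Qed.

Lemma QN x : Q x -> Q (- x).
Proof. by move=> qx; rewrite -mulN1r; apply: QM. Qed.
Lemma QB x y : Q x -> Q y -> Q (x - y).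
Proof. by move=> qx qy; apply: QD => //; apply: QN. Qed.
Lemma PN x : P x -> P (- x).
Proof. by move=> qx; rewrite -mulN1r; apply: PM. Qed.
Lemma Q_eq x y : x = y -> Q x -> Q y. Proof. by move=> ->. Qed.

Lemma clE m (Pm : P m) : cl m = mkq Pm.
Proof. rewrite /cl; case: pselect => // Pm'; exact: eq_exist. Qed.

Lemma cl_rep S : cl (rep S) = S.
Proof.
have [Pr Sv] := repP S; rewrite (clE Pr); move: Pr Sv.
case: S => S0 hS Pr /= Sv; exact: eq_exist.
Qed.

Lemma cl_eq m m' : P m -> P m' -> Q (m - m') -> cl m = cl m'.
Proof.
move=> Pm Pm' q; rewrite (clE Pm) (clE Pm'); apply: eq_exist.
apply: funext => y; apply: propext; split => h.
- by apply: (Q_eq _ (QD h q)); ring.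
- by apply: (Q_eq _ (QB h q)); ring.
Qed.

Lemma cl_eq0 m : P m -> cl m = cl 0 -> Q m.
Proof.
move=> Pm; rewrite (clE Pm) (clE P0) => /(congr1 sval) /= /(congr1 (fun f => f 0)).
rewrite subrr => h; have : Q (0 - m) by rewrite h.
by rewrite sub0r => /QN; rewrite opprK.
Qed.

Lemma Q_rep m : P m -> Q (rep (cl m) - m).
Proof.
move=> Pm; have [Pr Sv] := repP (cl m); move: Sv; rewrite {1}(clE Pm) /=.
move/(congr1 (fun f => f m)); rewrite subrr => h; have : Q (m - rep (cl m)) by rewrite -h.
by move/QN; rewrite opprB.
Qed.

Lemma P_rep S : P (rep S). Proof. by case: (repP S). Qed.

Ltac solP := repeat first [assumption | exact: P0 | apply: P_rep | apply: PD | apply: PM | apply: PN].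

Definition addq (S T : Mq) := cl (rep S + rep T).
Definition zeroq := cl 0.
Definition oppq (S : Mq) := cl (- rep S).
Definition scaleq (a : A) (S : Mq) := cl (psi a * rep S).

Lemma addqA : associative addq.
Proof.
move=> S T U; rewrite /addq; apply: cl_eq; [solP|solP|].
have q1 := Q_rep (PD (P_rep S) (P_rep T)); have q2 := Q_rep (PD (P_rep T) (P_rep U)).
by apply: (Q_eq _ (QB q2 q1)); ring.
Qed.
Lemma addqC : commutative addq.
Proof. by move=> S T; rewrite /addq addrC. Qed.
Lemma add0q : left_id zeroq addq.
Proof.
move=> S; rewrite /addq /zeroq -[RHS]cl_rep; apply: cl_eq; [solP|solP|].
by apply: (Q_eq _ (Q_rep P0)); ring.
Qed.
Lemma addNq : left_inverse zeroq oppq addq.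
Proof.
move=> S; rewrite /addq /oppq /zeroq; apply: cl_eq; [solP|solP|].
by apply: (Q_eq _ (Q_rep (PN (P_rep S)))); ring.
Qed.

HB.instance Definition _ := GRing.isZmodule.Build Mq addqA addqC add0q addNq.

Lemma PMpsi a S : P (psi a * rep S). Proof. by apply: PM; apply: P_rep. Qed.

Lemma scaleqA a b S : scaleq a (scaleq b S) = scaleq (a * b) S.
Proof.
rewrite /scaleq; apply: cl_eq; [solP|solP|].
rewrite psiM; have q := Q_rep (PMpsi b S).
by apply: (Q_eq _ (QM (psi a) q)); ring.
Qed.
Lemma scaleq1 : left_id 1 scaleq.
Proof. by move=> S; rewrite /scaleq psi1 mul1r cl_rep. Qed.
Lemma scaleqDr : right_distributive scaleq +%R.
Proof.
move=> a S T; rewrite /scaleq /= /addq; apply: cl_eq; [solP|solP|].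
have q1 := Q_rep (PMpsi a S); have q2 := Q_rep (PMpsi a T).
have q3 := QM (psi a) (Q_rep (PD (P_rep S) (P_rep T))).
rewrite [S + T]/(addq S T) /addq.
by apply: (Q_eq _ (QB q3 (QD q1 q2))); ring.
Qed.
Lemma scaleqDl S : {morph scaleq^~ S : a b / a + b}.
Proof.
move=> a b; rewrite /scaleq /= /addq psiD; apply: cl_eq; [solP|solP|].
have q1 := Q_rep (PMpsi a S); have q2 := Q_rep (PMpsi b S).
by apply: (Q_eq _ (QN (QD q1 q2))); ring.
Qed.

HB.instance Definition _ := GRing.Zmodule_isLmodule.Build A Mq scaleqA scaleq1 scaleqDr scaleqDl.

Lemma cl_add x y : P x -> P y -> cl x + cl y = cl (x + y).
Proof.
move=> Px Py; rewrite [_ + _]/(addq _ _) /addq; apply: cl_eq; [solP|solP|].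
have q1 := Q_rep Px; have q2 := Q_rep Py.
by apply: (Q_eq _ (QD q1 q2)); ring.
Qed.
Lemma cl_scale a x : P x -> a *: cl x = cl (psi a * x).
Proof.
move=> Px; rewrite [_ *: _]/(scaleq _ _) /scaleq; apply: cl_eq; [solP|solP|].
have q := QM (psi a) (Q_rep Px).
by apply: (Q_eq _ q); ring.
Qed.
Lemma cl_Q x z : P x -> Q z -> cl (x + z) = cl x.
Proof.
move=> Px Qz; apply: cl_eq; [solP; exact: QP|solP|].
by apply: (Q_eq _ Qz); ring.
Qed.
Lemma cl_zero : cl 0 = 0 :> Mq. Proof. by []. Qed.
Lemma cl_Q0 z : Q z -> cl z = 0.
Proof. by move=> Qz; rewrite -[z]add0r cl_Q. Qed.
End Quot.


Section Cat.
Variables (T : Type) (m m' : nat).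
Definition catf (f : 'I_m -> T) (g : 'I_m' -> T) : 'I_(m + m') -> T :=
  fun k => match split k with inl i => f i | inr j => g j end.
Lemma split_l (i : 'I_m) : split (lshift m' i) = inl i.
Proof. exact: (unsplitK (inl i)). Qed.
Lemma split_r (j : 'I_m') : split (rshift m j) = inr j.
Proof. exact: (unsplitK (inr j)). Qed.
Lemma catf_all (P : T -> Prop) f g : (forall k, P (f k)) -> (forall k, P (g k)) ->
  forall k, P (catf f g k).
Proof. by move=> hf hg k; rewrite /catf; case: split. Qed.
End Cat.

Lemma sum_catf (V : nmodType) (T1 T2 : Type) m m' (f : 'I_m -> T1) (g : 'I_m' -> T1)
  (f' : 'I_m -> T2) (g' : 'I_m' -> T2) (H : T1 -> T2 -> V) :
  \sum_(k < m + m') H (catf f g k) (catf f' g' k) =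
  \sum_(i < m) H (f i) (f' i) + \sum_(j < m') H (g j) (g' j).
Proof. by rewrite big_split_ord /catf; congr (_ + _); apply: eq_bigr => i _; rewrite ?split_l ?split_r. Qed.

Section Ideals.
Variables (R : comNzRingType) (I : R -> Prop).
Hypothesis hI : is_ideal I.

Lemma idealPow_ideal n : is_ideal (idealPow I n).
Proof.
case: n => [|n] //=; split.
- by exists 0%N, (fun _ => 0), (fun _ => 0); split; [case|case|rewrite big_ord0].
- move=> x y [m [s [t [hs ht ->]]]] [m' [s' [t' [hs' ht' ->]]]].
  exists (m + m')%N, (catf s s'), (catf t t'); split.
  + exact: catf_all.
  + exact: catf_all.
  + by rewrite (sum_catf s s' t t' (fun a b => a * b)).
- move=> r x [m [s [t [hs ht ->]]]].
  exists m, (fun k => r * s k), t; split => //.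
  + by move=> k; case: hI => _ _; apply.
  + by rewrite mulr_sumr; apply: eq_bigr => k _; rewrite mulrA.
Qed.

Lemma idealPow_sum n (m : nat) (f : 'I_m -> R) :
  (forall k, idealPow I n (f k)) -> idealPow I n (\sum_(k < m) f k).
Proof.
move=> hf; case: (idealPow_ideal n) => h0 hD _.
by elim/big_ind: _ => // x y; apply: hD.
Qed.

Lemma idealPowS n x : idealPow I n.+1 x -> idealPow I n x.
Proof.
move=> [m [s [t [hs ht ->]]]]; apply: (@idealPow_sum n m (fun k => s k * t k)) => k.
by case: (idealPow_ideal n) => _ _; apply; apply: ht.
Qed.

Lemma idealPow_mul n s t : I s -> idealPow I n t -> idealPow I n.+1 (s * t).
Proof.
move=> hs ht; exists 1%N, (fun _ => s), (fun _ => t); split => //.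
by rewrite big_ord1.
Qed.
End Ideals.

Section ExtIdeal.
Variables (R : comNzRingType) (A : comAlgType R).

Lemma extIdeal0 (J : R -> Prop) : extIdeal (A := A) J 0.
Proof. by exists 0%N, (fun _ => 0), (fun _ => 0); split; [case|rewrite big_ord0]. Qed.

Lemma extIdealD (J : R -> Prop) x y : extIdeal (A := A) J x -> extIdeal J y -> extIdeal J (x + y).
Proof.
move=> [m [c [s [hs ->]]]] [m' [c' [s' [hs' ->]]]].
exists (m + m')%N, (catf c c'), (catf s s'); split.
  exact: catf_all.
by rewrite (sum_catf c c' s s' (fun a b => a * b%:A)).
Qed.

Lemma extIdealM (J : R -> Prop) a x : extIdeal (A := A) J x -> extIdeal J (a * x).
Proof.
move=> [m [c [s [hs ->]]]]; exists m, (fun k => a * c k), s; split => //.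
by rewrite mulr_sumr; apply: eq_bigr => k _; rewrite mulrA.
Qed.

Lemma extIdeal_map (J J' : R -> Prop) (s : R) x :
  (forall t, J t -> J' (s * t)) -> extIdeal (A := A) J x -> extIdeal J' (s%:A * x).
Proof.
move=> hJ [m [c [s' [hs ->]]]]; exists m, c, (fun k => s * s' k); split.
  by move=> k; apply: hJ.
rewrite mulr_sumr; apply: eq_bigr => k _.
by rewrite mulr_algl -scalerA scalerAr.
Qed.

Lemma extIdeal_mono (J J' : R -> Prop) x :
  (forall t, J t -> J' t) -> extIdeal (A := A) J x -> extIdeal J' x.
Proof.
move=> hJ hx; have := extIdeal_map (s := 1) (J' := J') _ hx.
by rewrite scale1r mul1r; apply => t; rewrite mul1r; apply: hJ.
Qed.

Lemma extIdeal_all (I : R -> Prop) x : extIdeal (A := A) (idealPow I 0) x.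
Proof. by exists 1%N, (fun _ => x), (fun _ => 1); split => //; rewrite big_ord1 scale1r mulr1. Qed.
End ExtIdeal.


Section Main.
Variables (p : nat) (hp : prime p) (R : comNzRingType) (dR : R -> R) (A : comAlgType R)
  (dA : A -> A) (I : R -> Prop) (d : nat) (T : 'I_d -> A) (al be : A) (D : A -> A).
Hypotheses (hdR : is_delta p dR) (hdA : is_delta p dA)
  (hRA : forall r : R, dA (r%:A) = (dR r)%:A) (hI : is_ideal I) (hpI : I p%:R)
  (hsep : adically_separated A I) (hkb : kahler_basis I T)
  (hab : dA al = al * be) (hD : is_alpha_derivation al D).

Lemma Dlin r x y : D (r *: x + y) = r *: D x + D y. Proof. by case: hD. Qed.
Lemma D1 : D 1 = 0. Proof. by case: hD. Qed.
Lemma DM x y : D (x * y) = D x * y + x * D y + al * D x * D y. Proof. by case: hD. Qed.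
Lemma D0 : D 0 = 0.
Proof.
have := Dlin 1 0 0; rewrite !scale1r !addr0 => h.
by apply: (@addrI _ (D 0)); rewrite addr0 -h.
Qed.
Lemma D_add x y : D (x + y) = D x + D y.
Proof. by have := Dlin 1 x y; rewrite !scale1r. Qed.
Lemma D_scale r x : D (r *: x) = r *: D x.
Proof. by have := Dlin r x 0; rewrite !addr0 D0 addr0. Qed.
Lemma D_opp x : D (- x) = - D x.
Proof. by rewrite -scaleN1r D_scale scaleN1r. Qed.
Lemma D_alg (r : R) : D (r%:A) = 0.
Proof. by rewrite D_scale D1 scaler0. Qed.

Definition hB (x : A) : Bt al := (x, D x).
Lemma hB_zmod : zmod_morphism hB.
Proof. by move=> x y; rewrite /hB subBE /= D_add D_opp. Qed.
HB.instance Definition _ := GRing.isZmodMorphism.Build A (Bt al) hB hB_zmod.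
Lemma hB_monoid : monoid_morphism hB.
Proof. by split; [rewrite /hB D1 | move=> x y; rewrite /hB mulBE /= DM]. Qed.
HB.instance Definition _ := GRing.isMonoidMorphism.Build A (Bt al) hB hB_monoid.

Definition E (x : A) : A := D (dA x) - Fx p dA al be x (D x).
Definition eB (x : A) : Bt al := hB (dA x) - dB p dA be (hB x).
Lemma eE x : eB x = epsB al (E x).
Proof. by rewrite /eB /hB subBE /= subrr. Qed.

Lemma eB_add x y : eB (x + y) = eB x + eB y.
Proof.
rewrite /eB rmorphD dB_add // (dlD hdA) !rmorphB rmorphD rmorph_Cp.
ring.
Qed.

Lemma E_add x y : E (x + y) = E x + E y.
Proof. by have := eB_add x y; rewrite !eE -raddfD => /(congr1 (@snd _ _)). Qed.

Definition phi (x : A) : A := x ^+ p + p%:R * dA x.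
Definition psi (x : A) : A := phi x + al * D (phi x).

Lemma eB_mul x y :
  eB (x * y) = eB x * hB (phi y) + eB y * hB (phi x) - p%:R * eB x * eB y.
Proof.
have hm := MultP_all hp hdA hab (hB x) (hB y).
rewrite /MultP -rmorphM in hm.
rewrite /eB hm (dlM hdA) /phi ?rmorphD ?rmorphM ?rmorphXn ?rmorph_nat ?rmorphM ?rmorphXn.
ring.
Qed.

Lemma E_mul x y :
  E (x * y) = E x * psi y + E y * psi x - p%:R * al * E x * E y.
Proof.
have := eB_mul x y; rewrite !eE (natBE al p) /hB /epsB.
rewrite !(@mulBE A al) /= (@subBE A al) (@addBE A al) /= => /(congr1 (@snd _ _)) /= ->.
rewrite /psi; ring.
Qed.

Lemma phiD x y : phi (x + y) = phi x + phi y.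
Proof.
rewrite /phi (dlD hdA).
have -> : (x + y) ^+ p = x ^+ p + y ^+ p + p%:R * Cp p x y by rewrite pCp //; ring.
ring.
Qed.
Lemma phiM x y : phi (x * y) = phi x * phi y.
Proof. rewrite /phi (dlM hdA) exprMn; ring. Qed.
Lemma phi1 : phi 1 = 1.
Proof. by rewrite /phi (dl1 hdA) mulr0 addr0 expr1n. Qed.

Lemma psi_D x y : psi (x + y) = psi x + psi y.
Proof. by rewrite /psi phiD D_add; ring. Qed.
Lemma psi_M x y : psi (x * y) = psi x * psi y.
Proof. by rewrite /psi phiM DM; ring. Qed.
Lemma psi_1 : psi 1 = 1.
Proof. by rewrite /psi phi1 D1 mulr0 addr0. Qed.

Lemma psi_alg r : psi (r%:A) = (r ^+ p + p%:R * dR r)%:A.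
Proof.
have e : phi (r%:A) = (r ^+ p + p%:R * dR r)%:A.
  rewrite /phi hRA scalerDl exprZn expr1n -scalerA scaler_nat mulr_natl. done.
by rewrite /psi e D_alg mulr0 addr0.
Qed.

Lemma E_alg (r : R) : E (r%:A) = 0.
Proof. by rewrite /E hRA !D_alg (Fx_u0 hp al be hdA) subrr. Qed.

Lemma E_scale (r : R) x : E (r%:A * x) = psi (r%:A) * E x.
Proof. by rewrite E_mul E_alg; ring. Qed.

Lemma E_scale' (r : R) x : E (r *: x) = psi (r%:A) * E x.
Proof. by rewrite -[r *: x]mulr_algl E_scale. Qed.

Lemma I_phi r : I r -> I (r ^+ p + p%:R * dR r).
Proof.
case: hI => _ hID hIM ir; apply: hID.
  by rewrite -(prednK (prime_gt0 hp)) exprSr; apply: hIM.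
by rewrite mulrC; apply: hIM.
Qed.

Lemma E_in_all (hT : forall i, E (T i) = 0) n x : extIdeal (A := A) (idealPow I n) (E x).
Proof.
elim: n x => [|n IH] x; first exact: extIdeal_all.
pose P := extIdeal (A := A) (idealPow I n).
pose Q := extIdeal (A := A) (idealPow I n.+1).
have hQP : forall z, Q z -> P z.
  by move=> z; apply: extIdeal_mono => t; apply: idealPowS.
have H : QHyp P Q psi.
  split; rewrite /P /Q.
  - exact: extIdeal0.
  - exact: extIdealD.
  - exact: extIdealM.
  - exact: extIdeal0.
  - exact: extIdealD.
  - exact: extIdealM.
  - exact: hQP.
  - exact: psi_D.
  - exact: psi_1.
  - exact: psi_M.
pose M : lmodType A := Mq H.
have kill : forall r, I r -> forall m : M, r%:A *: m = 0.
  move=> r ir m; rewrite -(cl_rep m) (cl_scale H); last exact: P_rep.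
  apply: (cl_Q0 H).
  have hq : Q ((r ^+ p + p%:R * dR r)%:A * rep m).
    apply: extIdeal_map (P_rep m) => t ht.
    exact: idealPow_mul (I_phi ir) ht.
  by move: hq; rewrite -(psi_alg r).
have [D0 [_ _ uniq]] := hkb kill (fun _ => 0).
pose E' (z : A) : M := cl H (E z).
have hE'der : is_Rderivation E'.
  split.
  - move=> r z w; rewrite /E' E_add E_scale'.
    by rewrite (cl_scale H _ (IH z)) (cl_add H) //; [apply: extIdealM; apply: IH | apply: IH].
  - move=> z w; rewrite /E' E_mul.
    rewrite (cl_scale H _ (IH z)) (cl_scale H _ (IH w)) (cl_add H); try by apply: extIdealM; apply: IH.
    have -> : E z * psi w + E w * psi z - p%:R * al * E z * E w =
      (psi z * E w + psi w * E z) + (p%:R : R)%:A * (- (al * E z * E w)).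
      by rewrite scaler_nat -mulr_natl; ring.
    rewrite (@cl_Q _ _ _ _ H (psi z * E w + psi w * E z)) //.
    + by apply: extIdealD; apply: extIdealM; apply: IH.
    + rewrite -mulNr; apply: extIdeal_map; last by apply: extIdealM; apply: IH.
      by move=> t ht; apply: idealPow_mul.
have hzder : is_Rderivation (fun _ : A => (0 : M)).
  by split => *; rewrite ?scaler0 addr0.
have hE'T : forall i, E' (T i) = 0.
  by move=> i; rewrite /E' hT.
have e1 := uniq E' hE'der hE'T x.
have e2 := uniq (fun _ => 0) hzder (fun _ => erefl) x.
have : cl H (E x) = cl H 0 by rewrite -/(E' x) e1 -e2.
exact: cl_eq0 (IH x).
Qed.

Lemma main_iff : delta_compatible p dA al be D <->
  forall i : 'I_d, delta_compatible_elt p dA al be D (T i).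
Proof.
split => [h i | hT x]; first exact: h.
have hE : forall i, E (T i) = 0.
  by move=> i; rewrite /E hT /Fx /Sx subrr.
have e0 := hsep (fun n => E_in_all hE n x).
by move: e0; rewrite /E /Fx /Sx => /eqP; rewrite subr_eq0 => /eqP.
Qed.

End Main.

Unset Implicit Arguments.

Theorem proposition6p12 (p : nat) (hp : prime p)
  (R : comNzRingType) (deltaR : R -> R) (A : comAlgType R) (deltaA : A -> A)
  (I : R -> Prop) (d : nat) (T : 'I_d -> A) (alpha beta : A) (D : A -> A) :
  is_delta p deltaR ->
  is_delta p deltaA ->
  (forall r : R, deltaA (r%:A) = (deltaR r)%:A) ->
  is_ideal I -> I p%:R ->
  adically_separated A I ->
  (forall n, (0 < n)%N -> smooth_mod A (idealPow I n)) ->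
  kahler_basis I T ->
  deltaA alpha = alpha * beta ->
  is_alpha_derivation alpha D ->
  (delta_compatible p deltaA alpha beta D <->
   forall i : 'I_d, delta_compatible_elt p deltaA alpha beta D (T i)).
Proof.
move=> hdR hdA hRA hI hpI hsep _ hkb hab hD.
exact: (main_iff hp hdA hRA hI hpI hsep hkb hab hD).
Qed.
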